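(* Let $\mathfrak{H}$ be a Euclidean space and let $(\mathcal{X},\mathsf{S},\gamma,(\Lambda_{a})_{a\in\mathcal{A}})$ be a spectral decomposition system for $\mathfrak{H}$ such that the set $\{\Lambda_a\}_{a\in\mathcal{A}}$ is closed in $\mathscr{L}(\mathcal{X},\mathfrak{H})$, and suppose in addition that $\mathsf{S}$ is a finite group. Then for all $X,Y\in\mathfrak{H}$, \[ \gamma(X+Y)-\gamma(X)\in\operatorname{conv}\bigl(\mathsf{S}\cdot\gamma(Y)\bigr), \] where $\mathsf{S}\cdot z=\{\mathsf{s}\cdot z:\mathsf{s}\in\mathsf{S}\}$.
   Context: A Euclidean space is a finite-dimensional real Hilbert space; $\mathscr{L}(\mathcal{X},\mathfrak{H})$ carries the operator-norm topology. A spectral decomposition system for a Euclidean space $\mathfrak{H}$ is a tuple $(\mathcal{X},\mathsf{S},\gamma,(\Lambda_a)_{a\in\mathcal{A}})$ where $\mathcal{X}$ is a Euclidean space, $\mathsf{S}$ is a group acting on $\mathcal{X}$ such that each map $x\mapsto \mathsf{s}\cdot x$ is a linear isometry, $\gamma\colon\mathfrak{H}\to\mathcal{X}$ is a mapping, and each $\Lambda_a\colon\mathcal{X}\to\mathfrak{H}$ is a linear isometry, such that: [A] there exists a mapping $\tau\colon\mathcal{X}\to\mathcal{X}$ with $\tau(\mathsf{s}\cdot x)=\tau(x)$ for all $\mathsf{s},x$, $\tau(x)\in\mathsf{S}\cdot x$ for all $x$, and $\gamma\circ\Lambda_a=\tau$ for all $a\in\mathcal{A}$; [B] for every $X\in\mathfrak{H}$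 there exists $a\in\mathcal{A}$ with $X=\Lambda_a\gamma(X)$; [C] $\langle X,Y\rangle\le\langle\gamma(X),\gamma(Y)\rangle$ for all $X,Y\in\mathfrak{H}$. *)

(* Defs.v *)
From HB Require Import structures.
From mathcomp Require Import all_boot all_order all_algebra all_fingroup.
From mathcomp Require Import all_classical all_reals all_analysis.
Set Implicit Arguments. Unset Strict Implicit. Unset Printing Implicit Defensive.
Import Order.TTheory GRing.Theory Num.Theory.
Import numFieldNormedType.Exports.
Local Open Scope ring_scope.
Local Open Scope classical_set_scope.

(* A Euclidean space of dimension n is modelled (up to isometric isomorphism)
   by row vectors 'rV[R]_n with the standard inner product. *)
Definition dotp (R : realType) (n : nat) (u v : 'rV[R]_n) : R := (u *m v^T) 0 0.
Definition enorm (R : realType) (n : nat) (u : 'rV[R]_n) : R := Num.sqrt (dotp u u).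

Definition lin_isometry (R : realType) (m n : nat) (f : 'rV[R]_m -> 'rV[R]_n) : Prop :=
  (forall (a : R) (x y : 'rV[R]_m), f (a *: x + y) = a *: f x + f y) /\
  (forall x, enorm (f x) = enorm x).

(* linear map X -> H represented by a matrix (acting on rows on the right) *)
Definition lapp (R : realType) (m n : nat) (L : 'M[R]_(m, n)) (x : 'rV[R]_m) : 'rV[R]_n :=
  x *m L.

Definition isometric_action (R : realType) (m : nat) (gT : finGroupType)
    (act : gT -> 'rV[R]_m -> 'rV[R]_m) : Prop :=
  (forall x, act 1%g x = x) /\
  (forall s t x, act (s * t)%g x = act s (act t x)) /\
  (forall s, lin_isometry (act s)).

Definition orbit_set (R : realType) (m : nat) (gT : finGroupType)
    (act : gT -> 'rV[R]_m -> 'rV[R]_m) (x : 'rV[R]_m) : set 'rV[R]_m :=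
  [set act s x | s in [set: gT]].

Definition conv_hull (R : realType) (m : nat) (A : set 'rV[R]_m) : set 'rV[R]_m :=
  [set z | exists (k : nat) (w : 'I_k -> R) (p : 'I_k -> 'rV[R]_m),
     (forall i, A (p i)) /\ (forall i, 0 <= w i) /\ (\sum_(i < k) w i = 1) /\
     z = \sum_(i < k) w i *: p i].

(* spectral decomposition system (X = 'rV_m, H = 'rV_n) *)
Definition spectral_decomposition_system (R : realType) (m n : nat)
    (gT : finGroupType) (act : gT -> 'rV[R]_m -> 'rV[R]_m)
    (gamma : 'rV[R]_n -> 'rV[R]_m) (A : Type) (Lam : A -> 'M[R]_(m, n)) : Prop :=
  isometric_action act /\
  (forall a, lin_isometry (lapp (Lam a))) /\
  (exists tau : 'rV[R]_m -> 'rV[R]_m,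
     (forall s x, tau (act s x) = tau x) /\
     (forall x, orbit_set act x (tau x)) /\
     (forall a x, gamma (lapp (Lam a) x) = tau x)) /\
  (forall X, exists a, X = lapp (Lam a) (gamma X)) /\
  (forall X Y, dotp X Y <= dotp (gamma X) (gamma Y)).

(* Main.v *)
Require Import Defs.
From HB Require Import structures.
From mathcomp Require Import all_boot all_order all_algebra all_fingroup.
From mathcomp Require Import all_classical all_reals all_analysis.
From mathcomp Require Import ring lra.
Set Implicit Arguments. Unset Strict Implicit. Unset Printing Implicit Defensive.
Import Order.TTheory GRing.Theory Num.Theory.
Import numFieldNormedType.Exports.
Local Open Scope ring_scope.
Local Open Scope classical_set_scope.


Lemma dotpE (R : realType) n (u v : 'rV[R]_n) : dotp u v = \sum_i u 0 i * v 0 i.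
Proof. by rewrite /dotp !mxE; apply: eq_bigr => i _; rewrite mxE. Qed.

Lemma dotpC (R : realType) n (u v : 'rV[R]_n) : dotp u v = dotp v u.
Proof. by rewrite !dotpE; apply: eq_bigr => i _; rewrite mulrC. Qed.

Lemma dotpDl (R : realType) n (u v w : 'rV[R]_n) : dotp (u + v) w = dotp u w + dotp v w.
Proof. by rewrite !dotpE -big_split; apply: eq_bigr => i _; rewrite mxE mulrDl. Qed.

Lemma dotpZl (R : realType) n a (u w : 'rV[R]_n) : dotp (a *: u) w = a * dotp u w.
Proof. by rewrite !dotpE mulr_sumr; apply: eq_bigr => i _; rewrite mxE mulrA. Qed.

Lemma dotpNl (R : realType) n (u w : 'rV[R]_n) : dotp (- u) w = - dotp u w.
Proof. by rewrite -scaleN1r dotpZl mulN1r. Qed.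

Lemma dotpBl (R : realType) n (u v w : 'rV[R]_n) : dotp (u - v) w = dotp u w - dotp v w.
Proof. by rewrite dotpDl dotpNl. Qed.

Lemma dotpDr (R : realType) n (u v w : 'rV[R]_n) : dotp w (u + v) = dotp w u + dotp w v.
Proof. by rewrite dotpC dotpDl !(dotpC w). Qed.
Lemma dotpZr (R : realType) n a (u w : 'rV[R]_n) : dotp w (a *: u) = a * dotp w u.
Proof. by rewrite dotpC dotpZl dotpC. Qed.
Lemma dotpNr (R : realType) n (u w : 'rV[R]_n) : dotp w (- u) = - dotp w u.
Proof. by rewrite dotpC dotpNl dotpC. Qed.
Lemma dotpBr (R : realType) n (u v w : 'rV[R]_n) : dotp w (u - v) = dotp w u - dotp w v.
Proof. by rewrite dotpDr dotpNr. Qed.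
Lemma dotp0l (R : realType) n (w : 'rV[R]_n) : dotp 0 w = 0.
Proof. by rewrite dotpE big1 // => i _; rewrite mxE mul0r. Qed.
Lemma dotp0r (R : realType) n (w : 'rV[R]_n) : dotp w 0 = 0.
Proof. by rewrite dotpC dotp0l. Qed.

Lemma dotp_ge0 (R : realType) n (u : 'rV[R]_n) : 0 <= dotp u u.
Proof. by rewrite dotpE; apply: sumr_ge0 => i _; rewrite -expr2 sqr_ge0. Qed.

Lemma dotp_sqr_coord (R : realType) n (u : 'rV[R]_n) i : u 0 i ^+ 2 <= dotp u u.
Proof.
rewrite dotpE (bigD1 i) //= -expr2 lerDl.
by apply: sumr_ge0 => j _; rewrite -expr2 sqr_ge0.
Qed.

Lemma dotp_mulmx (R : realType) m n (x : 'rV[R]_m) (L : 'M[R]_(m, n)) (Z : 'rV[R]_n) :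
  dotp (x *m L) Z = dotp x (Z *m L^T).
Proof. by rewrite /dotp trmx_mul trmxK mulmxA. Qed.


Lemma lip_cont (K : realType) (V W : normedModType K) (f : V -> W) (C : K) :
  0 < C -> (forall x y, `|f x - f y| <= C * `|x - y|) -> continuous f.
Proof.
move=> C0 Hf x; apply/cvgrPdist_lt => e e0.
apply/nbhs_normP; exists (e / C); first by rewrite /= divr_gt0.
move=> y /= hy.
apply: le_lt_trans (Hf x y) _.
by rewrite -ltr_pdivlMl // mulrC.
Qed.

Lemma iso_dotp (R : realType) p q (f : 'rV[R]_p -> 'rV[R]_q) :
  lin_isometry f -> forall x y, dotp (f x) (f y) = dotp x y.
Proof.
move=> [Hlin Hn].
have Hsq z : dotp (f z) (f z) = dotp z z.
  have := Hn z; rewrite /enorm => /(congr1 (fun t => t ^+ 2)).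
  by rewrite !sqr_sqrtr ?dotp_ge0.
have Hadd x y : f (x + y) = f x + f y by rewrite -[f x]scale1r -Hlin scale1r.
move=> x y; have := Hsq (x + y); rewrite Hadd !dotpDl !dotpDr Hsq (Hsq y).
rewrite (dotpC (f y)) (dotpC y) => H.
have := Hsq x; lra.
Qed.

Lemma mx_norm_coord (R : realType) p q (E : 'M[R]_(p, q)) i j : `|E i j| <= `|E|.
Proof.
rewrite [X in _ <= X]/Num.norm /= mx_normrE.
by apply/bigmax_geP; right; exists (i, j).
Qed.


Lemma dotp_mul_bound (R : realType) p q (f : 'rV[R]_p) (E : 'M[R]_(p, q)) (Y : 'rV[R]_q) :
  `|dotp (f *m E) Y| <= `|E| * ((\sum_i `|f 0 i|) * \sum_j `|Y 0 j|).
Proof.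
rewrite dotpE; apply: le_trans (ler_norm_sum _ _ _) _.
rewrite mulr_sumr mulr_sumr; apply: ler_sum => j _.
rewrite normrM mulrA; apply: ler_wpM2r => //.
rewrite mxE mulr_sumr; apply: le_trans (ler_norm_sum _ _ _) _.
apply: ler_sum => i _; rewrite normrM mulrC; apply: ler_wpM2r => //.
exact: mx_norm_coord.
Qed.

Lemma local_step (R : realType) m n (A : Type) (Lam : A -> 'M[R]_(m,n))
  (gamma : 'rV[R]_n -> 'rV[R]_m) (tau : 'rV[R]_m -> 'rV[R]_m)
  (Hiso : forall a x y, dotp (x *m Lam a) (y *m Lam a) = dotp x y)
  (HC : forall X Y, dotp X Y <= dotp (gamma X) (gamma Y))
  (Hgt : forall a x, gamma (x *m Lam a) = tau x)
  k (B : 'M[R]_(k, m)) (HB : forall i, tau (row i B) = row i B) (u : 'rV[R]_k)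
  (W Y : 'rV[R]_n) (h eta : R) a b :
  0 < h -> W + h *: Y = gamma (W + h *: Y) *m Lam a -> W = gamma W *m Lam b ->
  `|Lam a - Lam b| <= eta ->
  dotp (u *m B) (gamma (W + h *: Y)) - dotp (u *m B) (gamma W) <=
    h * dotp (tau (u *m B)) (gamma Y) +
    h * (eta * \sum_i `|u 0 i| * ((\sum_j `|B i j|) * \sum_j `|Y 0 j|)).
Proof.
move=> h0 HV HW HE.
set V := W + h *: Y in HV *.
have val_eq c Z x : Z = gamma Z *m Lam c -> dotp (x *m Lam c) Z = dotp x (gamma Z).
  by move=> HZ; rewrite {1}HZ Hiso.
have K1 c x Z : dotp (x *m Lam c) Z <= dotp (tau x) (gamma Z).
  by have := HC (x *m Lam c) Z; rewrite Hgt.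
set w := u *m B.
have eqV : dotp w (gamma V) = dotp (w *m Lam a) W + h * dotp (w *m Lam a) Y.
  by rewrite -(val_eq _ _ w HV) /V dotpDr dotpZr.
have eqW : dotp w (gamma W) = dotp (w *m Lam b) W by rewrite (val_eq _ _ w HW).
have eqE : dotp (w *m Lam a) W - dotp (w *m Lam b) W = dotp (w *m (Lam a - Lam b)) W.
  by rewrite mulmxBr dotpBl.
set E := Lam a - Lam b.
have sand i : `|dotp (row i B *m E) W| <= h * (eta * ((\sum_j `|B i j|) * \sum_j `|Y 0 j|)).
  set f := row i B.
  have Ff : tau f = f by exact: HB.
  have h1 : dotp (f *m E) W <= 0.
    rewrite /E mulmxBr dotpBl (val_eq _ _ f HW) subr_le0.
    by have := K1 a f W; rewrite Ff.
  have h2 : 0 <= dotp (f *m E) V.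
    rewrite /E mulmxBr dotpBl (val_eq _ _ f HV) subr_ge0.
    by have := K1 b f V; rewrite Ff.
  have h3 : `|dotp (f *m E) Y| <= eta * ((\sum_j `|B i j|) * \sum_j `|Y 0 j|).
    apply: le_trans (dotp_mul_bound _ _ _) _.
    have -> : \sum_j `|f 0 j| = \sum_j `|B i j| by apply: eq_bigr => j _; rewrite mxE.
    by apply: ler_wpM2r => //; apply: mulr_ge0; apply: sumr_ge0.
  move: h2; rewrite /V dotpDr dotpZr => h2.
  have h4 : `|dotp (f *m E) W| <= h * `|dotp (f *m E) Y|.
    rewrite ler0_norm //.
    apply: (@le_trans _ _ (h * dotp (f *m E) Y)); first lra.
    by apply: ler_wpM2l; [exact: ltW | exact: ler_norm].
  by apply: le_trans h4 _; apply: ler_wpM2l => //; exact: ltW.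
have hmain : dotp (w *m E) W <= h * (eta * \sum_i `|u 0 i| * ((\sum_j `|B i j|) * \sum_j `|Y 0 j|)).
  rewrite /w (mulmx_sum_row u B) mulmx_suml.
  rewrite (big_morph (fun x => dotp x W) (fun x y => dotpDl x y W) (dotp0l W)).
  rewrite mulr_sumr mulr_sumr.
  apply: le_trans (ler_norm _) _.
  apply: le_trans (ler_norm_sum _ _ _) _.
  apply: ler_sum => i _.
  rewrite -scalemxAl dotpZl normrM.
  have := sand i; set r := h * _ => hr.
  have -> : h * (eta * (`|u 0 i| * ((\sum_j `|B i j|) * \sum_j `|Y 0 j|))) = `|u 0 i| * r.
    by rewrite /r; ring.
  by apply: ler_wpM2l.
have := K1 a w Y; have : 0 <= h by exact: ltW.
move=> hge hK; rewrite eqV eqW; move: eqE; rewrite -/E => eqE.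
have := ler_wpM2l hge hK; lra.
Qed.


Lemma aux_half (R : realType) (a b : R) : a <= b -> 0 < a -> 0 <= b - a / 2 /\ b - a / 2 < b.
Proof. by move=> h1 h2; split; lra. Qed.

Lemma aux_contra (R : realType) (gs gT p : R) : `|gs - gT| <= p / 2 -> p <= gT -> gs <= 0 -> 0 < gT -> False.
Proof. by move=> h1 h2 h3 h4; have := ler_norm (gT - gs); rewrite distrC; lra. Qed.

Lemma aux_min (R : realType) (a b : R) : 0 < a -> 0 < b ->
  0 < Num.min a b / 2 /\ Num.min a b / 2 < a /\ Num.min a b / 2 < b.
Proof.
move=> a0 b0; have m1 : Num.min a b <= a by rewrite ge_min lexx.
have m2 : Num.min a b <= b by rewrite ge_min lexx orbT.
have m0 : 0 < Num.min a b by rewrite lt_min a0 b0.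
move: (Num.min a b) m1 m2 m0 => x m1 m2 m0.
by split; [|split]; lra.
Qed.

Lemma aux_lt (R : realType) (s T hh d : R) : s <= T + hh -> hh < d -> s - T < d.
Proof. by move=> *; lra. Qed.

Lemma dini_e (R : realType) (psi : R -> R) (c K e : R) :
  0 < K -> 0 < e -> (forall s t, `|psi s - psi t| <= K * `|s - t|) ->
  (forall t, 0 <= t -> t < 1 -> exists2 d, 0 < d &
      forall h, 0 < h -> h < d -> psi (t + h) - psi t <= (c + e) * h) ->
  psi 1 - psi 0 <= c + e.
Proof.
move=> K0 e0 Hlip Hd.
pose g t := psi t - psi 0 - (c + e) * t.
pose L := K + `|c + e| + 1.
have L0 : 0 < L by rewrite /L; have := normr_ge0 (c + e); lra.
have glip s t : `|g s - g t| <= L * `|s - t|.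
  have -> : g s - g t = (psi s - psi t) - (c + e) * (s - t) by rewrite /g; ring.
  apply: le_trans (ler_normB _ _) _; rewrite normrM.
  have := Hlip s t; have := normr_ge0 (s - t); have := normr_ge0 (c + e).
  rewrite /L; nra.
pose S := [set t | 0 <= t <= 1 /\ forall s, 0 <= s <= t -> g s <= 0].
have S0 : S 0.
  split; first lra.
  move=> s hs; have -> : s = 0 by lra.
  by rewrite /g; lra.
have Sub : ubound S 1 by move=> t [ht _]; lra.
have hs : has_sup S by split; [exists 0 | exists 1].
set T := sup S.
have T0 : 0 <= T by exact: sup_upper_bound.
have T1 : T <= 1 by apply: ge_sup => //; exists 0.
have below s : 0 <= s -> s < T -> g s <= 0.
  move=> s0 sT; have sT' : 0 < T - s by lra.
  have [t [_ Ht] st] := sup_adherent sT' hs.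
  apply: Ht; rewrite -/T in st; lra.
have gT : g T <= 0.
  rewrite leNgt; apply/negP => gTpos.
  have [T0'|Tpos] := eqVneq T 0.
    by move: gTpos; rewrite T0' /g mulr0; lra.
  have Tp : 0 < T by rewrite lt_neqAle eq_sym Tpos T0.
  pose q := g T / L.
  have q0 : 0 < q by rewrite /q divr_gt0.
  pose mn := Num.min T q.
  have m1 : mn <= T by rewrite /mn ge_min lexx.
  have m2 : mn <= q by rewrite /mn ge_min lexx orbT.
  have m0 : 0 < mn by rewrite /mn lt_min Tp q0.
  pose s := T - mn / 2.
  have gs : g s <= 0.
    by have [? ?] := aux_half m1 m0; apply: below.
  have := glip s T; have -> : s - T = - (mn / 2) by rewrite /s; ring.
  have hmn : 0 <= mn / 2 by apply: divr_ge0 => //; exact: ltW.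
  rewrite normrN (ger0_norm hmn).
  have hq : L * q = g T by rewrite /q mulrC divfK // gt_eqF.
  have := ler_wpM2l (ltW L0) m2; rewrite hq => hm.
  rewrite mulrA => hl; exact: (aux_contra hl hm gs gTpos).
have T1' : T = 1.
  apply/eqP; rewrite eq_le T1 /= leNgt; apply/negP => Tlt.
  have [d d0 Hdd] := Hd T T0 Tlt.
  have hT : 0 < 1 - T by rewrite subr_gt0.
  have [hh0 [hhd hhT]] := aux_min d0 hT.
  set hh := Num.min d (1 - T) / 2 in hh0 hhd hhT.
  have ST : S (T + hh).
    split; first by apply/andP; split; lra.
    move=> s /andP[s0 s1]; have [sT|Ts] := ltrP s T; first exact: below.
    have [eT|neT] := eqVneq s T; first by rewrite eT.
    have hpos : 0 < s - T by rewrite subr_gt0 lt_neqAle eq_sym neT Ts.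
    have := Hdd (s - T) hpos (aux_lt s1 hhd).
    have -> : T + (s - T) = s by ring.
    move: gT; rewrite /g => gT' H; lra.
  have := sup_upper_bound hs ST; rewrite -/T; lra.
move: gT; rewrite T1' /g mulr1 => H.
by rewrite -subr_le0.
Qed.

Lemma dini (R : realType) (psi : R -> R) (c K : R) :
  0 < K -> (forall s t, `|psi s - psi t| <= K * `|s - t|) ->
  (forall t, 0 <= t -> t < 1 -> forall e, 0 < e -> exists2 d, 0 < d &
      forall h, 0 < h -> h < d -> psi (t + h) - psi t <= (c + e) * h) ->
  psi 1 - psi 0 <= c.
Proof.
move=> K0 Hlip Hd; apply/ler_addgt0Pr => e e0.
apply: (dini_e K0 e0 Hlip) => t t0 t1; exact: Hd.
Qed.


Lemma norm_le_coord (R : realType) p q (E : 'M[R]_(p, q)) (b : R) :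
  0 <= b -> (forall i j, `|E i j| <= b) -> `|E| <= b.
Proof.
move=> b0 H; rewrite [X in X <= _]/Num.norm /= mx_normrE.
by apply: bigmax_le => // -[i j] _; exact: H.
Qed.

Lemma norm_mulmx_le (R : realType) p q (x : 'rV[R]_p) (M : 'M[R]_(p, q)) :
  `|x *m M| <= `|x| * \sum_i \sum_j `|M i j|.
Proof.
apply: norm_le_coord => [|i j].
  by apply: mulr_ge0 => //; apply: sumr_ge0 => *; apply: sumr_ge0.
rewrite mxE ord1; apply: le_trans (ler_norm_sum _ _ _) _.
rewrite mulr_sumr; apply: ler_sum => k _; rewrite normrM.
apply: le_trans (_ : `|x| * `|M k j| <= _).
  by apply: ler_wpM2r => //; exact: mx_norm_coord.
apply: ler_wpM2l => //; rewrite (bigD1 j) //= lerDl.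
by apply: sumr_ge0.
Qed.

Lemma cont_sum (R : realType) (T : topologicalType) (I : finType) (f : I -> T -> R) :
  (forall i, continuous (f i)) -> continuous (fun x => \sum_i f i x).
Proof.
move=> H.
suff : forall s : seq I, continuous (fun x => \sum_(i <- s) f i x) by apply.
elim=> [|i s IH].
  have -> : (fun x => \sum_(i <- [::]) f i x) = fun=> 0 by apply/funext => x; rewrite big_nil.
  exact: cst_continuous.
have -> : (fun x => \sum_(j <- i :: s) f j x) = (f i + fun x => \sum_(j <- s) f j x).
  by apply/funext => x; rewrite big_cons.
by move=> x; apply: continuousD; [exact: H | exact: IH].
Qed.

Lemma dotp_cont (R : realType) m : continuous (fun v : 'rV[R]_m => dotp v v).
Proof.
have -> : (fun v : 'rV[R]_m => dotp v v) = fun v => \sum_j (v 0 j * v 0 j).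
  by apply/funext => v; rewrite dotpE.
apply: cont_sum => j x.
by apply: continuousM; apply: coord_continuous.
Qed.

Lemma zaux (V : zmodType) (z a b c : V) : z - (a - b + c) = z - a - (c - b).
Proof. rewrite !opprD !opprK !addrA. by rewrite addrAC. Qed.

Lemma zaux2 (V : zmodType) (z a b : V) : z - a - (z - b) = b - a.
Proof. by rewrite opprB addrC addrA subrK. Qed.

Lemma dotp_eq0 (R : realType) m (d : 'rV[R]_m) : dotp d d <= 0 -> d = 0.
Proof.
move=> H; apply/rowP => j; rewrite mxE.
have := dotp_sqr_coord d j => h.
have h2 : d 0 j ^+ 2 <= 0 by apply: le_trans h H.
have h3 : d 0 j ^+ 2 = 0 by apply/eqP; rewrite eq_le h2 sqr_ge0.
by apply/eqP; rewrite -sqrf_eq0 h3.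
Qed.

Lemma dotp_expand (R : realType) m (d v : 'rV[R]_m) t :
  dotp (d - t *: v) (d - t *: v) = dotp d d - 2 * t * dotp d v + t ^+ 2 * dotp v v.
Proof.
rewrite !dotpBl !dotpBr !dotpZl !dotpZr (dotpC v d); ring.
Qed.

Lemma aux_small (R : realType) (a b : R) : 0 <= b ->
  (forall t, 0 < t -> t <= 1 -> 2 * t * a <= t ^+ 2 * b) -> a <= 0.
Proof.
move=> b0 H; rewrite leNgt; apply/negP => a0.
have b1 : 0 < b + 1 by lra.
pose t := Num.min 1 (a / (b + 1)).
have t0 : 0 < t by rewrite /t lt_min ltr01 divr_gt0.
have t1 : t <= 1 by rewrite /t ge_min lexx.
have t2 : t * (b + 1) <= a.
  by rewrite -ler_pdivlMr // /t ge_min lexx orbT.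
have := H t t0 t1.
have : t * b <= a by nra.
move: t t0 t1 t2 => s s0 s1 s2 h1 h2.
nra.
Qed.

Lemma separation (R : realType) m k (p : 'I_k -> 'rV[R]_m) (z : 'rV[R]_m) :
  (forall w, exists i, dotp w z <= dotp w (p i)) ->
  exists lam : 'I_k -> R, (forall i, 0 <= lam i) /\ \sum_i lam i = 1 /\
    z = \sum_i lam i *: p i.
Proof.
move=> Hs.
have [i0 _] := Hs 0.
pose P : 'M[R]_(k, m) := \matrix_(i, j) p i 0 j.
have rowP_ i : row i P = p i by apply/rowP => j; rewrite !mxE.
have lP (l : 'rV[R]_k) : l *m P = \sum_i l 0 i *: p i.
  by rewrite mulmx_sum_row; apply: eq_bigr => i _; rewrite rowP_.
pose D := [set l : 'rV[R]_k | (forall i, 0 <= l 0 i) /\ \sum_i l 0 i = 1].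
have De i : D (delta_mx 0 i).
  split => [j|]; first by rewrite mxE; case: (_ && _).
  rewrite (bigD1 i) //= big1 ?addr0; first by rewrite mxE !eqxx.
  by move=> j /negbTE ji; rewrite mxE ji andbF.
have Dcomp : compact D.
  have Bc : compact [set v : 'rV[R]_k | forall i, `[(0:R), 1]%classic (v ord0 i)].
    by apply: (@rV_compact _ _ (fun=> `[(0:R), 1]%classic)) => i; exact: segment_compact.
  apply: (subclosed_compact _ Bc).
    have -> : D = \bigcap_(i in setT) [set l : 'rV[R]_k | 0 <= l 0 i] `&`
                 [set l | \sum_i l 0 i = 1].
      apply/seteqP; split => l.
        by case=> h1 h2; split => // i _; exact: h1.
      by case=> h1 h2; split => // i; exact: h1.
    apply: closedI.
      apply: (@closed_bigI _ _ setT (fun i => [set l : 'rV[R]_k | 0 <= l 0 i])) => i _.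
      have cc := @coord_continuous R 1 k 0 i.
      have := proj1 (continuous_closedP _) cc _ (@closed_ge R 0).
      by [].
    have cs : continuous (fun l : 'rV[R]_k => \sum_i l 0 i).
      by apply: cont_sum => i; exact: coord_continuous.
    exact: (proj1 (continuous_closedP _) cs _ (@closed_eq R 1)).
  move=> v [v0 v1] i; rewrite /= in_itv /=; apply/andP; split; first exact: v0.
  rewrite -v1 (bigD1 i) //= lerDl; apply: sumr_ge0 => *; exact: v0.
pose f (l : 'rV[R]_k) := dotp (z - l *m P) (z - l *m P).
have fcont : continuous f.
  have c1 : continuous (fun l : 'rV[R]_k => z - l *m P).
    apply: (@lip_cont _ _ _ _ (\sum_i \sum_j `|P i j| + 1)).
      by apply: ltr_wpDl => //; apply: sumr_ge0 => *; apply: sumr_ge0.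
    move=> x y; rewrite zaux2 -mulmxBl -normrN -mulNmx opprB.
    apply: le_trans (norm_mulmx_le _ _) _; rewrite mulrC.
    by apply: ler_wpM2r => //; rewrite lerDl.
  move=> x; exact: (continuous_comp (c1 x) (@dotp_cont R m _)).
have fc : {within D, continuous f} by exact: continuous_subspaceT.
have [l lD lmin] := compact_EVT_min (ex_intro _ _ (De i0)) Dcomp fc.
rewrite inE in lD; case: lD => l0 l1.
exists (fun i => l 0 i); split => //; split => //.
rewrite -lP; apply/eqP; rewrite -subr_eq0; apply/eqP.
set q := l *m P; set d := z - q.
have key i : dotp d (p i - q) <= 0.
  apply: (@aux_small _ _ (dotp (p i - q) (p i - q))); first exact: dotp_ge0.
  move=> t t0 t1.
  pose lt := (1 - t) *: l + t *: delta_mx 0 i.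
  have ltD : D lt.
    have [e0 e1] := De i.
    split => [j|].
      rewrite !mxE; apply: addr_ge0; apply: mulr_ge0 => //; try lra.
    rewrite (eq_bigr (fun j => (1 - t) * l 0 j + t * (delta_mx 0 i : 'rV[R]_k) 0 j)).
      by rewrite big_split /= -!mulr_sumr l1 e1; ring.
    by move=> j _; rewrite !mxE.
  have := lmin lt (mem_set ltD).
  have -> : f lt = dotp (d - t *: (p i - q)) (d - t *: (p i - q)).
    rewrite /f /lt mulmxDl -!scalemxAl -rowE rowP_ /d /q.
    by congr dotp; rewrite scalerBr scalerBl scale1r zaux.
  rewrite dotp_expand /f -/q -/d; lra.
have [i Hi] := Hs d.
apply: dotp_eq0.
have := key i; rewrite dotpBr.
have : dotp d z = dotp d d + dotp d q by rewrite -dotpDr /d subrK.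
lra.
Qed.


Lemma nonroot_exists (R : realType) (P : {poly R}) : P != 0 -> exists t, P.[t] != 0.
Proof.
move=> P0; case: (pselect (exists t, P.[t] != 0)) => // H; exfalso.
have H' t : P.[t] = 0.
  by case: (eqVneq P.[t] 0) => // ne; exfalso; apply: H; exists t.
have Hall : all (root P) [seq i%:R | i <- iota 0 (size P)].
  by apply/allP => x _; rewrite /root H'.
have Hu : uniq [seq (i%:R : R) | i <- iota 0 (size P)].
  rewrite map_inj_uniq ?iota_uniq //.
  by move=> a b /eqP; rewrite eqr_nat => /eqP.
by have := max_poly_roots P0 Hall Hu; rewrite size_map size_iota ltnn.
Qed.

Lemma act_inv (R : realType) m (gT : finGroupType) (act : gT -> 'rV[R]_m -> 'rV[R]_m) :
  isometric_action act -> forall s x, act (s^-1)%g (act s x) = x.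
Proof. by move=> [H1 [H2 _]] s x; rewrite -H2 mulVg H1. Qed.

Lemma act_dotp (R : realType) m (gT : finGroupType) (act : gT -> 'rV[R]_m -> 'rV[R]_m) :
  isometric_action act -> forall s x y, dotp (act s x) y = dotp x (act (s^-1)%g y).
Proof.
move=> Ha s x y; have [H1 [H2 H3]] := Ha.
rewrite -{1}(act_inv Ha (s^-1)%g y) invgK.
exact: (iso_dotp (H3 s)).
Qed.

Lemma fixed_not_orth (R : realType) m (gT : finGroupType)
  (act : gT -> 'rV[R]_m -> 'rV[R]_m) (tau : 'rV[R]_m -> 'rV[R]_m) :
  isometric_action act -> (forall s x, tau (act s x) = tau x) ->
  (forall x, exists s, tau x = act s x) ->
  forall v : 'rV[R]_m, v != 0 -> exists f, tau f = f /\ dotp f v != 0.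
Proof.
move=> Ha Hinv Horb v v0.
case: (pselect (exists f, tau f = f /\ dotp f v != 0)) => // H; exfalso.
have Hz f : tau f = f -> dotp f v = 0.
  by move=> Ff; case: (eqVneq (dotp f v) 0) => // ne; exfalso; apply: H; exists f.
have Hx x : exists s : gT, dotp x (act (s^-1)%g v) = 0.
  have [s Hs] := Horb x; exists s; rewrite -(act_dotp Ha); apply: Hz.
  by rewrite -Hs -{2}(Hinv s x) Hs.
pose vs (s : gT) := act (s^-1)%g v.
have vs0 s : vs s != 0.
  apply/negP => /eqP e; move: v0; rewrite -(act_inv Ha (s^-1)%g v) invgK.
  rewrite -/(vs s) e.
  have [_ [_ H3]] := Ha; have [Hl _] := H3 s.
  have -> : act s 0 = 0.
    have := Hl 1 0 0; rewrite scale1r addr0 => e2.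
    rewrite scale1r in e2.
    by apply: (@addrI _ (act s 0)); rewrite addr0 -e2.
  by rewrite eqxx.
pose ps (s : gT) : {poly R} := \sum_(j < m) vs s 0 j *: 'X^j.
have ps_ev s t : (ps s).[t] = dotp (\row_j t ^+ j) (vs s).
  rewrite /ps horner_sum dotpE; apply: eq_bigr => j _.
  by rewrite hornerZ hornerXn mxE mulrC.
have ps0 s : ps s != 0.
  apply/eqP => e; move/eqP: (vs0 s); apply; apply/rowP => j; rewrite mxE.
  have := congr1 (fun p : {poly R} => p`_j) e.
  rewrite coef0 /ps coef_sum (bigD1 j) //= big1 ?addr0.
    by rewrite coefZ coefXn eqxx mulr1.
  move=> i ij; rewrite coefZ coefXn.
  case: eqP => [/val_inj ji|]; last by rewrite mulr0.
  by rewrite ji eqxx in ij.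
have Pne : \prod_s ps s != 0 by apply/prodf_neq0 => s _; exact: ps0.
have [t Ht] := nonroot_exists Pne.
have [s Hs] := Hx (\row_j t ^+ j).
move: Ht; rewrite horner_prod; apply/negP; rewrite negbK.
by rewrite (bigD1 s) //= ps_ev Hs mul0r.
Qed.

Lemma span_fixed (R : realType) m (tau : 'rV[R]_m -> 'rV[R]_m) :
  (forall v : 'rV[R]_m, v != 0 -> exists f, tau f = f /\ dotp f v != 0) ->
  exists k (B : 'M[R]_(k, m)), (forall i, tau (row i B) = row i B) /\ row_full B.
Proof.
move=> Hv.
suff H : forall r, (r <= m)%N -> exists k (B : 'M[R]_(k, m)),
    (forall i, tau (row i B) = row i B) /\ (r <= \rank B)%N.
  have [k [B [HB Hr]]] := H m (leqnn m).
  exists k, B; split => //; rewrite /row_full eqn_leq rank_leq_col Hr.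
  done.
elim=> [_|r IH rm].
  by exists 0%N, 0; split => // -[].
have [k [B [HB Hr]]] := IH (ltnW rm).
have [lt|ge] := ltnP r (\rank B); first by exists k, B.
have rB : \rank B = r by apply/eqP; rewrite eqn_leq ge Hr.
pose K := kermx B^T.
have rK : (0 < \rank K)%N by rewrite mxrank_ker mxrank_tr rB subn_gt0.
have [j Hj] : exists j, row j K != 0.
  case: (pselect (exists j, row j K != 0)) => // H; exfalso.
  have K0 : K = 0.
    apply/row_matrixP => j; rewrite row0.
    by case: (eqVneq (row j K) 0) => // ne; exfalso; apply: H; exists j.
  by move: rK; rewrite K0 mxrank0.
set v := row j K in Hj.
have vB : v *m B^T = 0 by rewrite /v -row_mul mulmx_ker row0.
have [f [Ff fv]] := Hv v Hj.
have nf : ~~ (f <= B)%MS.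
  apply/negP => /submxP [u fu]; move: fv; rewrite fu /dotp.
  have -> : u *m B *m v^T = u *m (v *m B^T)^T by rewrite trmx_mul trmxK mulmxA.
  by rewrite vB trmx0 mulmx0 mxE eqxx.
exists (k + 1)%N, (col_mx B f); split.
  move=> i; rewrite -[i](@splitK k 1); case: (fintype.split i) => i' /=.
    by rewrite rowKu.
  rewrite rowKd.
  have -> : row i' f = f by apply/rowP => j'; rewrite mxE (ord1 i').
  exact: Ff.
have lt : (B < col_mx B f)%MS.
  rewrite ltmxE -addsmxE addsmxSl /=.
  by apply: contra nf; rewrite -addsmxE addsmx_sub => /andP[].
by have := rank_ltmx lt; rewrite rB.
Qed.


Lemma sup_le_euclid (R : realType) p (x : 'rV[R]_p) : `|x| <= Num.sqrt (dotp x x).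
Proof.
apply: norm_le_coord => [|i j]; first exact: sqrtr_ge0.
rewrite (ord1 i) -sqrtr_sqr ler_sqrt; last exact: dotp_ge0.
exact: dotp_sqr_coord.
Qed.

Lemma norm_mulmx_le2 (R : realType) p q (x : 'rV[R]_p) (M : 'M[R]_(p, q)) :
  `|x *m M| <= (\sum_i `|x 0 i|) * `|M|.
Proof.
apply: norm_le_coord => [|i j]; first by apply: mulr_ge0 => //; apply: sumr_ge0.
rewrite mxE ord1; apply: le_trans (ler_norm_sum _ _ _) _.
rewrite mulr_suml; apply: ler_sum => k _; rewrite normrM.
by apply: ler_wpM2l => //; exact: mx_norm_coord.
Qed.

Lemma vec_mx_norm (R : realType) p q (u : 'rV[R]_(p * q)) : `|vec_mx u| <= `|u|.
Proof.
apply: norm_le_coord => // i j; rewrite /vec_mx mxE; exact: mx_norm_coord.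
Qed.

Lemma vec_mx_cont (R : realType) p q : continuous (@vec_mx R p q).
Proof.
apply: (@lip_cont _ _ _ _ 1) => // x y; rewrite mul1r -linearB.
exact: vec_mx_norm.
Qed.

Lemma iso_entry (R : realType) m n (L : 'M[R]_(m, n)) :
  (forall x y, dotp (x *m L) (y *m L) = dotp x y) -> forall i j, `|L i j| <= 1.
Proof.
move=> H i j.
have h1 : dotp (delta_mx 0 i *m L) (delta_mx 0 i *m L) = 1.
  rewrite H dotpE (bigD1 i) //= big1 ?addr0; first by rewrite mxE !eqxx mulr1.
  by move=> k /negbTE ki; rewrite mxE ki andbF mul0r.
have := dotp_sqr_coord (delta_mx 0 i *m L) j; rewrite h1 -rowE mxE.
by move=> h2; rewrite -sqrtr_sqr -sqrtr1 ler_sqrt.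
Qed.

Lemma aux_fin (R : realType) (mu h N x : R) : mu <= x -> x <= 2 * (h * N) ->
  h * (2 * N + 1) < mu -> 0 < h -> False.
Proof. by move=> *; nra. Qed.

Lemma usc (R : realType) m n (A : Type) (Lam : A -> 'M[R]_(m,n))
  (gamma : 'rV[R]_n -> 'rV[R]_m)
  (Hiso : forall a x y, dotp (x *m Lam a) (y *m Lam a) = dotp x y)
  (Hlip : forall V W, dotp (gamma V - gamma W) (gamma V - gamma W) <= dotp (V - W) (V - W))
  (Hcl : closed (range Lam)) (W Y : 'rV[R]_n) (eta : R) :
  0 < eta -> exists2 d, 0 < d & forall h a, 0 < h -> h < d ->
     W + h *: Y = gamma (W + h *: Y) *m Lam a ->
     exists b, W = gamma W *m Lam b /\ `|Lam a - Lam b| < eta.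
Proof.
move=> eta0.
pose AW b := W = gamma W *m Lam b.
pose Q := range Lam `&` [set L | forall b, AW b -> eta <= `|L - Lam b|].
pose Q' := vec_mx @^-1` Q.
have Qcl : closed Q.
  apply: closedI => //.
  have -> : [set L | forall b, AW b -> eta <= `|L - Lam b|] =
            \bigcap_(b in AW) ~` ball (Lam b) eta.
    apply/seteqP; split => L /= H b Hb.
      by rewrite -ball_normE /= distrC; apply/negP; rewrite -leNgt; exact: H.
    by have := H b Hb; rewrite -ball_normE /= distrC => /negP; rewrite -leNgt.
  apply: closed_bigI => b _; apply: open_closedC; exact: ball_open.
have Q'cl : closed Q' by exact: (proj1 (continuous_closedP _) (@vec_mx_cont R m n) _ Qcl).
have Q'b : forall u, Q' u -> `|u| <= 1.
  move=> u [[a _ ea] _]; apply: norm_le_coord => // i k.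
  rewrite (ord1 i); case/mxvec_indexP: k => i' j'.
  have -> : u 0 (mxvec_index i' j') = vec_mx u i' j' by rewrite /vec_mx mxE.
  rewrite -ea; exact: iso_entry.
have Q'c : compact Q'.
  have Hbd : bounded_set Q'.
    rewrite /= /bounded_near; near=> M => u /Q'b hu.
    apply: le_trans hu _; near: M; apply: nbhs_pinfty_ge; exact: num_real.
  exact: bounded_closed_compact Hbd Q'cl.
have QaP a : ~ (exists b, AW b /\ `|Lam a - Lam b| < eta) -> Q' (mxvec (Lam a)).
  move=> Hn; rewrite /Q' /= mxvecK; split; first by exists a.
  move=> b Hb; rewrite leNgt; apply/negP => lt; apply: Hn; by exists b.
case: (pselect (Q' !=set0)) => [Q'ne | Q'e]; last first.
  exists 1 => // h a _ _ _.
  case: (pselect (exists b, AW b /\ `|Lam a - Lam b| < eta)) => // Hn; exfalso.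
  by apply: Q'e; exists (mxvec (Lam a)); exact: QaP.
pose gW := gamma W.
pose g (u : 'rV[R]_(m * n)) := `|W - gW *m vec_mx u|.
have gcont : continuous g.
  apply: (@lip_cont _ _ _ _ (\sum_i `|gW 0 i| + 1)).
    by apply: ltr_wpDl => //; apply: sumr_ge0.
  move=> x y; apply: le_trans (ler_dist_dist _ _) _.
  rewrite zaux2 -mulmxBr -linearB.
  apply: le_trans (norm_mulmx_le2 _ _) _.
  rewrite -normrN -linearN opprB.
  apply: ler_pM => //; first by apply: sumr_ge0.
    by rewrite lerDl.
  exact: vec_mx_norm.
have gc : {within Q', continuous g} by exact: continuous_subspaceT.
have [u0 u0Q gmin] := compact_EVT_min Q'ne Q'c gc.
set mu := g u0.
have mu0 : 0 < mu.
  rewrite lt_def normr_ge0 andbT normr_eq0 subr_eq0; apply/negP => /eqP e.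
  move: u0Q; rewrite inE => -[[c _ ec] Hq].
  have Hc : AW c by rewrite /AW ec; exact: e.
  by have := Hq c Hc; rewrite ec subrr normr0 leNgt eta0.
pose N := Num.sqrt (dotp Y Y).
have N0 : 0 <= N by exact: sqrtr_ge0.
have dN : 0 < 2 * N + 1 by lra.
exists (mu / (2 * N + 1)); first by rewrite divr_gt0.
move=> h a h0 hd HV.
case: (pselect (exists b, AW b /\ `|Lam a - Lam b| < eta)) => // Hn; exfalso.
have := gmin _ (mem_set (QaP a Hn)); rewrite /g mxvecK => hmin.
set V := W + h *: Y in HV.
have eq1 : W - gW *m Lam a = (gamma V - gW) *m Lam a - h *: Y.
  by rewrite mulmxBl -HV /V addrAC addrK.
have b1 : `|(gamma V - gW) *m Lam a| <= h * N.
  apply: le_trans (sup_le_euclid _) _.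
  rewrite Hiso; apply: le_trans (_ : Num.sqrt (dotp (V - W) (V - W)) <= _).
    by rewrite ler_sqrt ?dotp_ge0 //; exact: Hlip.
  rewrite /V addrAC subrr add0r dotpZl dotpZr mulrA -expr2 sqrtrM ?sqr_ge0 //.
  by rewrite sqrtr_sqr ger0_norm // ltW.
have b2 : `|h *: Y| <= h * N.
  rewrite normrZ (ger0_norm (ltW h0)).
  by apply: ler_wpM2l; [exact: ltW | exact: sup_le_euclid].
have : `|W - gW *m Lam a| <= 2 * (h * N).
  by rewrite eq1; apply: le_trans (ler_normB _ _) _; lra.
move: hmin; rewrite -/mu => hmin h3.
have : h * (2 * N + 1) < mu by rewrite -ltr_pdivlMr.
have : 0 <= h * N by apply: mulr_ge0 => //; exact: ltW.
move=> h4 h5; exact: (aux_fin hmin h3 h5 h0).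
Unshelve. all: by end_near.
Qed.


Lemma dotp_norm_bound (R : realType) p (w d : 'rV[R]_p) :
  `|dotp w d| <= (\sum_i `|w 0 i|) * `|d|.
Proof.
rewrite dotpE mulr_suml; apply: le_trans (ler_norm_sum _ _ _) _.
apply: ler_sum => i _; rewrite normrM; apply: ler_wpM2l => //.
exact: mx_norm_coord.
Qed.

Lemma aux_eta (R : realType) (e C : R) : 0 < e -> 0 <= C -> e / (C + 1) * C <= e.
Proof.
move=> e0 C0; rewrite mulrAC ler_pdivrMr; last lra.
nra.
Qed.

Lemma aux_fin2 (R : realType) (h c x e : R) : 0 < h -> x <= e -> h * c + h * x <= (c + e) * h.
Proof. by move=> *; nra. Qed.

Lemma main_ineq (R : realType) m n (gT : finGroupType)
    (act : gT -> 'rV[R]_m -> 'rV[R]_m) (gamma : 'rV[R]_n -> 'rV[R]_m)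
    (A : Type) (Lam : A -> 'M[R]_(m, n)) (tau : 'rV[R]_m -> 'rV[R]_m)
  (Hiso : forall a x y, dotp (x *m Lam a) (y *m Lam a) = dotp x y)
  (HC : forall X Y, dotp X Y <= dotp (gamma X) (gamma Y))
  (Hgt : forall a x, gamma (x *m Lam a) = tau x)
  (HB : forall X, exists a, X = gamma X *m Lam a)
  (Hlip : forall V W, dotp (gamma V - gamma W) (gamma V - gamma W) <= dotp (V - W) (V - W))
  (Hcl : closed (range Lam))
  k (B : 'M[R]_(k, m)) (HBr : forall i, tau (row i B) = row i B) (u : 'rV[R]_k)
  (X Y : 'rV[R]_n) :
  dotp (u *m B) (gamma (X + Y) - gamma X) <= dotp (tau (u *m B)) (gamma Y).
Proof.
set w := u *m B.
pose psi t := dotp w (gamma (X + t *: Y)).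
pose N := Num.sqrt (dotp Y Y).
have N0 : 0 <= N by exact: sqrtr_ge0.
pose Sw := \sum_i `|w 0 i|.
have Sw0 : 0 <= Sw by apply: sumr_ge0.
have Hps : psi 1 - psi 0 <= dotp (tau w) (gamma Y).
  apply: (@dini _ psi _ (Sw * N + 1)); first by have := mulr_ge0 Sw0 N0; lra.
    move=> s t; rewrite /psi -dotpBr.
    apply: le_trans (dotp_norm_bound _ _) _.
    apply: le_trans (_ : Sw * (`|s - t| * N) <= _); last first.
      have := mulr_ge0 Sw0 N0; have := normr_ge0 (s - t).
      rewrite mulrCA; nra.
    apply: ler_wpM2l => //; apply: le_trans (sup_le_euclid _) _.
    apply: le_trans (_ : Num.sqrt (dotp ((s - t) *: Y) ((s - t) *: Y)) <= _).
      rewrite ler_sqrt ?dotp_ge0 //; apply: le_trans (Hlip _ _) _.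
      by rewrite opprD addrACA subrr add0r -scalerBl.
    rewrite dotpZl dotpZr mulrA -expr2 sqrtrM ?sqr_ge0 //.
    by rewrite sqrtr_sqr.
  move=> t t0 t1 e e0.
  pose C := \sum_i `|u 0 i| * ((\sum_j `|B i j|) * \sum_j `|Y 0 j|).
  have C0 : 0 <= C.
    apply: sumr_ge0 => i _; apply: mulr_ge0 => //; apply: mulr_ge0; apply: sumr_ge0 => //.
  have eta0 : 0 < e / (C + 1) by rewrite divr_gt0 //; lra.
  have [d d0 Hd] := usc Hiso Hlip Hcl (X + t *: Y) Y eta0.
  exists d => // h h0 hd.
  have [a Ha] := HB (X + t *: Y + h *: Y).
  have [b [Hb Hab]] := Hd h a h0 hd Ha.
  have := local_step Hiso HC Hgt HBr u h0 Ha Hb (ltW Hab).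
  have -> : X + t *: Y + h *: Y = X + (t + h) *: Y by rewrite scalerDl addrA.
  rewrite -/w -/(psi t) -/(psi (t + h)) => Hl.
  apply: le_trans Hl _.
  rewrite -/C; apply: aux_fin2 => //; exact: aux_eta.
by move: Hps; rewrite /psi scale1r scale0r addr0 dotpBr.
Qed.

Theorem theorem5p1 (R : realType) (m n : nat) (gT : finGroupType)
    (act : gT -> 'rV[R]_m -> 'rV[R]_m) (gamma : 'rV[R]_n -> 'rV[R]_m)
    (A : Type) (Lam : A -> 'M[R]_(m, n)) :
  spectral_decomposition_system act gamma Lam ->
  closed (range Lam) ->
  forall X Y : 'rV[R]_n,
    conv_hull (orbit_set act (gamma Y)) (gamma (X + Y) - gamma X).
Proof.
move=> [Ha [Hlam [[tau [Htinv [Htorb Hgt]]] [HB HC]]]] Hcl X Y.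
have Hiso a x y : dotp (x *m Lam a) (y *m Lam a) = dotp x y.
  exact: (iso_dotp (Hlam a)).
have HB' X' : exists a, X' = gamma X' *m Lam a by exact: HB.
have Hgt' a x : gamma (x *m Lam a) = tau x by exact: Hgt.
have Horb x : exists s, tau x = act s x.
  by have [s _ hs] := Htorb x; exists s.
have gnorm V : dotp (gamma V) (gamma V) = dotp V V.
  by have [a Ha'] := HB' V; rewrite [in RHS]Ha' Hiso.
have Hlip V W : dotp (gamma V - gamma W) (gamma V - gamma W) <= dotp (V - W) (V - W).
  rewrite !dotpBl !dotpBr gnorm gnorm (dotpC (gamma W)) (dotpC W).
  have := HC V W; lra.
have [k [B [HBr Bfull]]] := span_fixed (fixed_not_orth Ha Htinv Horb).
set z := gamma (X + Y) - gamma X.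
pose p (i : 'I_#|gT|) := act (enum_val i) (gamma Y).
have Hsep : forall w, exists i, dotp w z <= dotp w (p i).
  move=> w.
  have /submxP [u Hu] : (w <= B)%MS by exact: submx_full.
  have Hm := main_ineq act Hiso HC Hgt' HB' Hlip Hcl HBr u X Y.
  rewrite -Hu in Hm.
  have [s Hs] := Horb w.
  exists (enum_rank (s^-1)%g); rewrite /p enum_rankK.
  by move: Hm; rewrite Hs (act_dotp Ha).
have [lam [l0 [l1 lz]]] := separation Hsep.
exists #|gT|, lam, p; split; first by move=> i; exists (enum_val i).
by split.
Qed.
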